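(* Let $\theta \in (0,1)$ and let $X$ be a nonnegative random variable which is not almost surely zero and which is $\theta$-subscalable. Then $\mathbb{E}[X] = \infty$.
   Context: For $\theta \in (0,1)$, a nonnegative random variable $X$ with survival function $\overline{F}(x) = \mathbb{P}(X > x)$ is called $\theta$-subscalable if $\theta \, \overline{F}(x) \leq \overline{F}(x/\theta)$ for all $x \geq 0$. *)

(* Defs.v *)
From HB Require Import structures.
From mathcomp Require Import all_boot all_order all_algebra.
From mathcomp Require Import all_classical all_reals all_analysis.
Set Implicit Arguments. Unset Strict Implicit. Unset Printing Implicit Defensive.
Import Order.TTheory GRing.Theory Num.Theory.
Local Open Scope ring_scope.
Local Open Scope ereal_scope.

Definition subscalable d (T : measurableType d) (R : realType)
  (P : probability T R) (X : {RV P >-> R}) (theta : R) : Prop :=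
  forall x : R, (0 <= x)%R -> (theta%:E * ccdf X x <= ccdf X (x / theta)%R).

(* Main.v *)
Require Import Defs.
From HB Require Import structures.
From mathcomp Require Import all_boot all_order all_algebra.
From mathcomp Require Import all_classical all_reals all_analysis.
From mathcomp Require Import ring lra measurable_realfun.
Import Order.TTheory GRing.Theory Num.Theory.
Local Open Scope ring_scope.
Local Open Scope ereal_scope.
Local Open Scope classical_set_scope.

Lemma ccdfE d (T : measurableType d) (R : realType)
  (P : probability T R) (X : {RV P >-> R}) r :
  ccdf X r = P (X @^-1` `]r, +oo[).
Proof. by []. Qed.

Lemma ccdf_ge0 d (T : measurableType d) (R : realType)
  (P : probability T R) (X : {RV P >-> R}) r : 0 <= ccdf X r.
Proof. by rewrite ccdfE measure_ge0. Qed.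

Lemma pos_ccdf d (T : measurableType d) (R : realType)
  (P : probability T R) (X : {RV P >-> R}) :
  (forall t, (0 <= X t)%R) ->
  ~ {ae P, forall t, X t = 0%R} ->
  exists a : R, (0 < a)%R /\ 0 < ccdf X a.
Proof.
move=> X0 nae.
apply: contrapT => H; apply: nae.
have H0 : forall k : nat, P (X @^-1` `]((k.+1)%:R^-1)%R, +oo[) = 0.
  move=> k; apply/eqP; rewrite eq_le measure_ge0 andbT leNgt; apply/negP => Hk.
  by apply: H; exists ((k.+1)%:R^-1)%R; split => //; rewrite invr_gt0 ltr0n.
apply: (@negligibleS _ _ _ _ (\bigcup_k (X @^-1` `]((k.+1)%:R^-1)%R, +oo[))).
  move=> t /= Xt.
  have Xp : (0 < X t)%R by rewrite lt_neqAle X0 andbT eq_sym; apply/eqP.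
  have [k Hk] : exists k : nat, (k.+1%:R^-1 < X t)%R.
    exists (Num.truncn (X t)^-1); rewrite -[X in (_ < X)%R]invrK ltf_pV2 ?posrE ?ltr0n ?invr_gt0 //.
    exact: Num.Theory.truncnS_gt.
  by exists k => //=; rewrite in_itv /= Hk.
apply: negligible_bigcup => k.
exists (X @^-1` `]((k.+1)%:R^-1)%R, +oo[); split => //.
exact: measurable_funPTI.
exact: H0.
Qed.

Theorem lemma5 (d : measure_display) (T : measurableType d) (R : realType)
  (P : probability T R) (X : {RV P >-> R}) (theta : R) :
  (0 < theta < 1)%R ->
  (forall t, (0 <= X t)%R) ->
  ~ {ae P, forall t, X t = 0%R} ->
  subscalable X theta ->
  'E_P[X] = +oo.
Proof.
move=> /andP[t0 t1] X0 nae sub.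
have [a [a0 Ga]] := @pos_ccdf _ _ _ P X X0 nae.
pose y := fun n : nat => (a / theta ^+ n)%R.
have y_ge0 n : (0 <= y n)%R.
  by rewrite /y divr_ge0 ?ltW // exprn_gt0.
have yS n : y n.+1 = (y n / theta)%R by rewrite /y exprSr invfM mulrA.
have y0 : y 0%N = a by rewrite /y expr0 divr1.
have y_le n : (y n <= y n.+1)%R.
  rewrite yS ler_pdivlMr //; apply: ler_piMr => //; exact: ltW.
have scal n : (theta ^+ n)%:E * ccdf X a <= ccdf X (y n).
  elim: n => [|n IH]; first by rewrite expr0 mul1e y0.
  rewrite yS exprSr EFinM muleAC muleC.
  apply: le_trans (sub _ (y_ge0 n)).
  apply: lee_pmul => //; first by rewrite lee_fin ltW.
  by rewrite mule_ge0 // ?ccdf_ge0 // lee_fin exprn_ge0 // ltW.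
pose A n := X @^-1` `](y n.+1), +oo[.
pose c n := (y n.+1 - y n)%R.
have mA n : measurable (A n) by exact: measurable_funPTI.
have c0 n : (0 <= c n)%R by rewrite /c subr_ge0.
have inA n t : (t \in A n) = (y n.+1 < X t)%R.
  by rewrite /A; apply/idP/idP => [/set_mem|H]; rewrite /= ?in_itv /= ?andbT //; apply/mem_set; rewrite /= in_itv /= andbT.
have inv t N : ((\sum_(0 <= n < N) c n * \1_(A n) t) + a <= y N)%R /\
    (((\sum_(0 <= n < N) c n * \1_(A n) t) + a <= a)%R \/
     ((\sum_(0 <= n < N) c n * \1_(A n) t) + a <= X t)%R).
  elim: N => [|N [IH1 IH2]]; first by rewrite big_geq // add0r y0; split => //; left.
  rewrite big_nat_recr //= indicE inA.
  case: ltP => HX.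
  - rewrite mulr1; set S := (\sum_(0 <= n < N) _)%R in IH1 IH2 *.
    have cE : c N = (y N.+1 - y N)%R by [].
    rewrite cE; split; [lra|right; lra].
  - rewrite mulr0 addr0; split => //; have := y_le N; lra.
have pw t N : ((\sum_(0 <= n < N) c n * \1_(A n) t) <= X t)%R.
  have [_ [H|H]] := inv t N; have := X0 t; lra.
pose r := (a * (1 - theta) * fine (ccdf X a))%R.
have gE : ccdf X a = (fine (ccdf X a))%:E.
  rewrite fineK // ccdfE fin_num_measure //; exact: measurable_funPTI.
have key N : (r *+ N)%:E <= 'E_P[X].
  rewrite expectation_def.
  apply: (@le_trans _ _ (\int[P]_t (\sum_(0 <= n < N) (c n * \1_(A n) t)%:E))); last first.
    apply: ge0_le_integral => //.
    - move=> t _; apply: sume_ge0 => n _; rewrite lee_fin mulr_ge0 //.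
    - apply: emeasurable_sum => n; apply/measurable_EFinP; apply: measurable_funM => //.
    - apply/measurable_EFinP; exact: measurable_funP.
    - move=> t _; rewrite sumEFin lee_fin; exact: pw.
  rewrite ge0_integral_sum //; last first.
    - by move=> n t _; rewrite lee_fin mulr_ge0.
    - move=> n; apply/measurable_EFinP; apply: measurable_funM => //.
  have -> : (r *+ N)%R = (\sum_(0 <= n < N) r)%R by rewrite sumr_const_nat subn0.
  rewrite -sumEFin; apply: lee_sum => n _.
  under eq_integral do rewrite EFinM.
  rewrite ge0_integralZl_EFin //; last first.
    apply/measurable_EFinP; exact: measurable_indic.
  rewrite integral_indic // setIT.
  rewrite [Y in _ <= _ * Y](_ : _ = ccdf X (y n.+1)) //.
  have rE : r = (c n * theta ^+ n.+1 * fine (ccdf X a))%R.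
    rewrite /r /c /y; congr (_ * _)%R; rewrite exprSr.
    have tn : (theta ^+ n != 0)%R by rewrite expf_neq0 // gt_eqF.
    field; rewrite tn /= gt_eqF //.
  rewrite rE !EFinM -muleA -gE.
  apply: lee_pmul => //; first by rewrite lee_fin.
    by rewrite mule_ge0 ?ccdf_ge0 // lee_fin exprn_ge0 // ltW.
have g0 : (0 < fine (ccdf X a))%R by rewrite -lte_fin -gE.
have r0 : (0 < r)%R.
  by rewrite /r !mulr_gt0 // subr_gt0.
have := key 0%N; rewrite mulr0n.
case E : 'E_P[X] => [e| //| //] => e0.
have := key (Num.truncn (e / r)).+1; rewrite E lee_fin -mulr_natr.
have := Num.Theory.truncnS_gt (e / r); rewrite ltr_pdivrMr //.
move=> H1 H2; exfalso; lra.
Qed.
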